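(* Let $q$ be a power of $2$ and let $\mathcal{C}$ be the Hermitian-Lifted Code (defined in the context). Then the minimum Hamming distance $d$ of $\mathcal{C}$ satisfies $q^2 \leq d \leq q^3 - q^2 + 1$.
   Context: Let $\mathcal{X} = \{(x,y) \in (\mathbb{F}_{q^2})^2 : x^q + x = y^{q+1}\}$ (affine $\mathbb{F}_{q^2}$-points of the Hermitian curve, $|\mathcal{X}|=q^3$). For $\alpha,\beta\in\mathbb{F}_{q^2}$ let $L_{\alpha,\beta}(t) = (\alpha t+\beta,t)$ and $\mathcal{L}=\{L_{\alpha,\beta}\}$. Let $\mathcal{F}$ be the set of $f \in \mathbb{F}_{q^2}[x,y]$ such that for every $L \in \mathcal{L}$ there exists $g \in \mathbb{F}_{q^2}[t]$ with $\deg g \le q-1$ and $f(L(t)) = g(t)$ for all $t\in\mathbb{F}_{q^2}$ with $L(t)\in\mathcal{X}$. The Hermitian-Lifted Code is $\mathcal{C} = \{(f(P))_{P\in\mathcal{X}} : f\in\mathcal{F}\}$. *)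

(* Defs.v *)
From HB Require Import structures.
From mathcomp Require Import all_boot all_order all_algebra all_field.
From mathcomp Require Import mpoly.
Set Implicit Arguments. Unset Strict Implicit. Unset Printing Implicit Defensive.
Import GRing.Theory.
Local Open Scope ring_scope.

Section Hermitian.
Variable F : finFieldType.
Variable q : nat.

Definition herm_pt (P : F * F) : bool := P.1 ^+ q + P.1 == P.2 ^+ q.+1.

Definition HPt := {P : F * F | herm_pt P}.

Definition evalxy (f : {mpoly F[2]}) (a b : F) : F :=
  f.@[fun i : 'I_2 => if val i == 0%N then a else b].

(* f belongs to the family F: its restriction to every line
   L_{alpha,beta}(t) = (alpha t + beta, t), on the points t with L(t) in X,
   agrees with a univariate polynomial of degree <= q - 1 *)
Definition lifted_fam (f : {mpoly F[2]}) : Prop :=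
  forall alpha beta : F, exists g : {poly F},
    (size g <= q)%N /\
    forall t : F, herm_pt (alpha * t + beta, t) ->
      evalxy f (alpha * t + beta) t = g.[t].

Definition HL_code (w : {ffun HPt -> F}) : Prop :=
  exists f : {mpoly F[2]}, lifted_fam f /\ forall P : HPt, w P = evalxy f (val P).1 (val P).2.

End Hermitian.

Definition hamming (I : finType) (K : eqType) (w1 w2 : {ffun I -> K}) : nat :=
  #|[set i | w1 i != w2 i]|.

Definition is_min_dist (I : finType) (K : eqType) (C : {ffun I -> K} -> Prop) (d : nat) : Prop :=
  (exists w1 w2, [/\ C w1, C w2, w1 <> w2 & hamming w1 w2 = d]) /\
  (forall w1 w2, C w1 -> C w2 -> w1 <> w2 -> (d <= hamming w1 w2)%N).

(* Main.v *)
Require Import Defs.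
From HB Require Import structures.
From mathcomp Require Import all_boot all_order all_algebra all_field.
From mathcomp Require Import mpoly.
From mathcomp Require Import ring zify.
From Stdlib Require Import Classical.
Set Implicit Arguments. Unset Strict Implicit. Unset Printing Implicit Defensive.
Import GRing.Theory.
Local Open Scope ring_scope.

Lemma ex_min (P : nat -> Prop) n : P n -> exists d, P d /\ forall m, P m -> (d <= m)%N.
Proof.
elim/ltn_ind: n => n IH Pn.
case: (classic (exists m, (m < n)%N /\ P m)) => [[m [lt Pm]]|no]; first exact: IH m lt Pm.
exists n; split => // m Pm; rewrite leqNgt; apply/negP => lt; by apply: no; exists m.
Qed.

Lemma roots_bound (F : finFieldType) (S : {set F}) (p : {poly F}) :
  p != 0 -> {in S, forall x, root p x} -> (#|S| < size p)%N.
Proof.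
move=> pnz hr; rewrite cardE; apply: max_poly_roots => //; last exact: enum_uniq.
by apply/allP => x; rewrite mem_enum; apply: hr.
Qed.

Lemma fiber_lemma (T U : finType) (A : {set T}) (C : {set U}) (f : T -> U) m k :
  {in A, forall x, f x \in C} -> (#|C| <= m)%N ->
  (forall c, c \in C -> #|[set x in A | f x == c]| <= k)%N ->
  #|A| = (m * k)%N ->
  forall c, c \in C -> #|[set x in A | f x == c]| = k.
Proof.
move=> hAC hC hk hA c0 c0C.
have E : #|A| = (\sum_(c in C) #|[set x in A | f x == c]|)%N.
  rewrite -sum1_card (partition_big f (mem C)) //=.
  apply: eq_bigr => c _; rewrite -sum1_card; apply: eq_bigl => x; by rewrite inE.
have E2 : (\sum_(c in C) k = #|C| * k)%N by rewrite sum_nat_const.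
rewrite (bigD1 c0) //= in E; rewrite (bigD1 c0) //= in E2.
have L : (\sum_(c in C | c != c0) #|[set x in A | f x == c]| <= \sum_(c in C | c != c0) k)%N.
  by apply: leq_sum => c /andP [cC _]; apply: hk.
have := hk c0 c0C; have : (#|C| * k <= m * k)%N by rewrite leq_mul2r hC orbT.
lia.
Qed.

Section Main.
Variable F : finFieldType.
Variable q : nat.
Hypothesis hq : (2 <= q)%N.
Hypothesis hF : #|F| = (q * q)%N.
Hypothesis frobD : forall u v : F, (u + v) ^+ q = u ^+ q + v ^+ q.
Hypothesis frobN : forall u : F, (- u) ^+ q = - (u ^+ q).

Lemma frobB (u v : F) : (u - v) ^+ q = u ^+ q - v ^+ q.
Proof. by rewrite frobD frobN. Qed.

Lemma frob2 (u : F) : (u ^+ q) ^+ q = u.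
Proof. by rewrite -exprM -hF expf_card. Qed.

Lemma card_Fq : (#|[set c : F | c ^+ q == c]| <= q)%N.
Proof.
have pnz : ('X^q - 'X : {poly F}) != 0.
  by rewrite -size_poly_eq0 size_addl ?size_polyXn // size_opp size_polyX; lia.
have := roots_bound pnz (S := [set c : F | c ^+ q == c]).
rewrite size_addl ?size_polyXn ?size_opp ?size_polyX; last lia.
move=> H; have : (#|[set c : F | c ^+ q == c]| < q.+1)%N; last by [].
apply: H => x; by rewrite inE /root !hornerE subr_eq0.
Qed.

Lemma trace_fiber (c : F) : c ^+ q = c -> #|[set z : F | z ^+ q + z == c]| = q.
Proof.
move=> hc.
have := @fiber_lemma F F setT [set c : F | c ^+ q == c] (fun z => z ^+ q + z) q q.
move=> H.
have -> : [set z : F | z ^+ q + z == c] = [set x in setT | x ^+ q + x == c].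
  by apply/setP => z; rewrite !inE.
apply: H.
- by move=> z _; rewrite inE frobD frob2 addrC.
- exact: card_Fq.
- move=> c' _.
  have pnz : ('X^q + ('X - c'%:P) : {poly F}) != 0.
    by rewrite -size_poly_eq0 size_addl ?size_polyXn // size_XsubC; lia.
  have := roots_bound pnz (S := [set x in setT | x ^+ q + x == c']).
  rewrite size_addl ?size_polyXn ?size_XsubC; last lia.
  move=> H2; have : (#|[set x in setT | (x ^+ q + x)%R == c']| < q.+1)%N; last by [].
  apply: H2 => x; rewrite !inE /root !hornerE => /eqP <-.
  by apply/eqP; exact: subrr.
- by rewrite cardsT hF.
- by rewrite inE hc.
Qed.


Lemma secant (a b al : F) : a ^+ q + a = b ^+ q.+1 -> al != b ^+ q ->
  (q <= #|[set t : F | (t != b) && herm_pt q ((al * t + (a - al * b))%R, t)]|)%N.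
Proof.
move=> hab hal.
set g := al - b ^+ q.
have gnz : g != 0 by rewrite subr_eq0.
have gq : g ^+ q = al ^+ q - b by rewrite frobB frob2.
set c := (g ^+ q * g)^-1.
have gqnz : g ^+ q != 0 by rewrite expf_neq0.
have cnz : c != 0 by rewrite invr_eq0 mulf_neq0.
have hc : c ^+ q = c.
  by rewrite /c exprVn exprMn frob2 mulrC.
set Z := [set z : F | z ^+ q + z == c].
have hZ := trace_fiber hc.
have znz : forall z, z \in Z -> z != 0.
  move=> z; rewrite inE; apply: contraL => /eqP ->.
  by rewrite expr0n addr0 eqn0Ngt (ltnW hq) /= eq_sym.
pose phi z := b + (g * z)^-1.
have phi_inj : {in Z &, injective phi}.
  move=> z1 z2 h1 h2 /addrI /invr_inj /mulfI; exact.
apply: (@leq_trans #|phi @: Z|); first by rewrite (card_in_imset phi_inj) hZ.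
apply: subset_leq_card.
apply/subsetP => t /imsetP [z hz ->]; rewrite inE.
have gznz : g * z != 0 by rewrite mulf_neq0 // znz.
apply/andP; split.
  by rewrite /phi -subr_eq0 addrC addKr invr_eq0.
set s := (g * z)^-1.
have zz := znz z hz.
have key : g ^+ q * g * (z ^+ q + z) = 1.
  by move: hz; rewrite inE => /eqP ->; rewrite mulrV // unitfE mulf_neq0.
have hs : s ^+ q * s = (al ^+ q - b) * s ^+ q + (al - b ^+ q) * s.
  rewrite -gq -/g /s exprVn exprMn.
  have gzq : g ^+ q * z ^+ q != 0 by rewrite mulf_neq0 // expf_neq0 // znz.
  transitivity (1 / (g ^+ q * z ^+ q * (g * z))).
    by field; rewrite zz gnz expf_neq0 // gqnz.
  by rewrite -key; field; rewrite zz gnz expf_neq0 // gqnz.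
have ha : a ^+ q = b * b ^+ q - a by rewrite -exprS -hab addrK.
rewrite /herm_pt /= /phi -/s.
have -> : al * (b + s) + (a - al * b) = a + al * s by ring.
rewrite frobD exprMn ha exprS frobD.
apply/eqP.
transitivity (b * b ^+ q + b * s ^+ q + s * b ^+ q + s ^+ q * s); last by ring.
rewrite hs; ring.
Qed.


Lemma lower (h : {mpoly F[2]}) (P0 : F * F) : lifted_fam q h -> herm_pt q P0 ->
  evalxy h P0.1 P0.2 != 0 ->
  (q * q <= #|[set P : F * F | herm_pt q P && (evalxy h P.1 P.2 != 0)%R]|)%N.
Proof.
case: P0 => a b /= hl hP hnz.
have hab : a ^+ q + a = b ^+ q.+1 by apply/eqP.
pose pr al t := [&& t != b, herm_pt q (al * t + (a - al * b), t)
                   & evalxy h (al * t + (a - al * b)) t != 0].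
have ex : forall al, al != b ^+ q -> exists t, pr al t.
  move=> al hal.
  have [g [sg hg]] := hl al (a - al * b).
  have gb : g.[b] = evalxy h a b.
    have := hg b; rewrite (_ : al * b + (a - al * b) = a); last by ring.
    by move=> /(_ hP) <-.
  have gnz : g != 0 by apply: contraNneq hnz => g0; rewrite -gb g0 horner0.
  have := secant hab hal.
  set T := [set t | _].
  case: (boolP [exists t, pr al t]) => [/existsP // | /existsPn H].
  have : (#|T| < size g)%N.
    apply: roots_bound gnz _ => t; rewrite inE => /andP [tb ht].
    rewrite /root -hg //.
    by have := H t; rewrite /pr tb ht /= negbK.
  lia.
pose Q al := if [pick t | pr al t] is Some t then (al * t + (a - al * b), t) else (a, b).
have QP : forall al, al != b ^+ q ->
    pr al (Q al).2 /\ Q al = (al * (Q al).2 + (a - al * b), (Q al).2).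
  move=> al hal; rewrite /Q; case: pickP => [t Ht | none]; first by [].
  by have [t Ht] := ex al hal; have := none t; rewrite Ht.
set S := [set al : F | al != b ^+ q].
have Qinj : {in S &, injective Q}.
  move=> a1 a2; rewrite !inE => h1 h2 e.
  have [p1 e1] := QP a1 h1; have [_ e2] := QP a2 h2.
  move: e; rewrite e1 e2 => -[E T2]; rewrite -T2 in E.
  move: p1 => /and3P [tb _ _].
  apply/eqP; rewrite -subr_eq0.
  have : (a1 - a2) * ((Q a1).2 - b) = 0.
    transitivity ((a1 * (Q a1).2 + (a - a1 * b)) - (a2 * (Q a1).2 + (a - a2 * b))).
      by ring.
    by rewrite E subrr.
  by move/eqP; rewrite mulf_eq0 !subr_eq0 (negbTE tb) orbF.
have nin : (a, b) \notin Q @: S.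
  apply/imsetP => -[al]; rewrite inE => hal e.
  have [p1 _] := QP al hal; move: p1 => /and3P [tb _ _].
  by rewrite -e /= eqxx in tb.
have sub : (a, b) |: (Q @: S) \subset [set P : F * F | herm_pt q P && (evalxy h P.1 P.2 != 0)].
  apply/subsetP => P; rewrite !inE => /orP [/eqP -> | /imsetP [al]]; first by rewrite hP hnz.
  rewrite inE => hal ->.
  have [p1 e1] := QP al hal; move: p1 => /and3P [_ hh ne].
  by rewrite e1 /= hh ne.
have cS : #|S| = #|F|.-1.
  by rewrite -(cardsC1 (b ^+ q)); apply: eq_card => x; rewrite !inE.
apply: leq_trans (subset_leq_card sub).
rewrite cardsU1 nin card_in_imset // cS hF.
lia.
Qed.


Lemma pair_card (A B : finType) (pr : pred (A * B)) :
  #|[set u | pr u]| = (\sum_(b : B) #|[set a | pr (a, b)]|)%N.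
Proof.
rewrite -sum1_card (partition_big snd xpredT) //=.
apply: eq_bigr => b _.
rewrite (_ : #|[set a | pr (a, b)]| = #|(fun a => (a, b)) @: [set a | pr (a, b)]|); last first.
  by rewrite card_imset // => x y [].
rewrite -sum1_card; apply: eq_bigl => -[x y]; rewrite !inE /=.
apply/andP/imsetP => [[hp /eqP eyb] | [x' ]]; first by rewrite -eyb; exists x; rewrite ?inE.
by rewrite inE => hp [-> ->].
Qed.

Lemma cardX : #|[set P : F * F | herm_pt q P]| = (q * q * q)%N.
Proof.
rewrite pair_card.
under eq_bigr => y _.
  rewrite (_ : [set a | herm_pt q (a, y)] = [set z | z ^+ q + z == y ^+ q.+1]); last first.
    by apply/setP => z; rewrite !inE.
  rewrite trace_fiber; last by rewrite exprS exprMn frob2 mulrC.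
  over.
by rewrite sum_nat_const cardT -cardE hF.
Qed.

Lemma size_prod_le2 (s : seq F) (G : F -> {poly F}) :
  (forall i, size (G i) <= 2)%N -> (size (\prod_(i <- s) G i)%R <= (size s).+1)%N.
Proof.
move=> hG; elim: s => [|x s IH]; first by rewrite big_nil size_poly1.
rewrite big_cons /=; apply: leq_trans (size_polyMleq _ _) _.
move: IH (hG x); set c := size _; set a := size (G x); lia.
Qed.

Definition i0 : 'I_2 := ord0.
Definition i1 : 'I_2 := ord_max.
Definition K := [set a : F | (a ^+ q + a == 0) && (a != 0)].
Definition fK : {mpoly F[2]} := \prod_(a in K) ('X_i0 - 'X_i1 - a%:MP).

Lemma evalfK x y : evalxy fK x y = \prod_(a in K) (x - y - a).
Proof.
rewrite /evalxy /fK rmorph_prod; apply: eq_bigr => a _.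
by rewrite !rmorphB /= !mevalXU mevalC.
Qed.

Lemma cardK : #|K| = q.-1.
Proof.
have := trace_fiber (c := 0); rewrite expr0n (_ : (q == 0%N) = false) /=; last lia.
move=> /(_ erefl); rewrite (cardsD1 0) inE expr0n (_ : (q == 0%N) = false) /=; last lia.
rewrite addr0 eqxx add1n => e; rewrite -e /=; apply: eq_card => x.
by rewrite !inE andbC.
Qed.

Lemma lifted_fK : lifted_fam q fK.
Proof.
move=> al be.
exists (\prod_(a in K) ((al - 1)%:P * 'X + (be - a)%:P)); split.
  rewrite -big_enum; apply: leq_trans (size_prod_le2 _ _) _.
    move=> i; rewrite size_MXaddC; case: ifP => // _; rewrite ltnS size_polyC; lia.
  by rewrite -cardE cardK; lia.
move=> t _; rewrite evalfK horner_prod; apply: eq_bigr => a _.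
rewrite hornerMXaddC hornerC; ring.
Qed.


Lemma cardHP (pr : pred (F * F)) :
  #|[set i : HPt F q | pr (val i)]| = #|[set P | herm_pt q P && pr P]|.
Proof.
rewrite -(card_imset _ val_inj); congr #|pred_of_set _|; apply/setP => P.
rewrite inE; apply/imsetP/idP => [[i]|/andP [hP prP]].
  by rewrite inE => hi ->; rewrite (valP i) hi.
by exists (exist _ P hP); rewrite ?inE.
Qed.

Lemma zeros_bound :
  (q.-1 * q.+1 <= #|[set P : F * F | herm_pt q P && (evalxy fK P.1 P.2 == 0)%R]|)%N.
Proof.
set U := [set u : F * F | (u.2 \in K) && herm_pt q (u.1 + u.2, u.1)].
have hU : (q.-1 * q.+1 <= #|U|)%N.
  rewrite /U pair_card (bigID (mem K)) /=.
  apply: leq_trans (leq_addr _ _).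
  rewrite -cardK -sum_nat_const; apply: leq_sum => b bK.
  have -> : [set a | (b \in K) && herm_pt q (a + b, a)] = [set t | herm_pt q (t + b, t)].
    by apply/setP => t; move: bK; rewrite !inE => ->.
  set T := [set t | herm_pt q (t + b, t)].
  have bK' := bK; rewrite inE in bK'; case/andP: bK' => /eqP hb bnz.
  rewrite (cardsD1 0) (_ : 0 \in T); last by rewrite inE /herm_pt /= add0r expr0n /= hb.
  rewrite add1n ltnS.
  have hs := @secant b 0 1.
  have : (q <= #|[set t | (t != 0)%R && herm_pt q ((1 * t + (b - 1 * 0))%R, t)]|)%N.
    apply: hs; first by rewrite hb expr0n.
    by rewrite expr0n eqn0Ngt (ltnW hq) /= oner_neq0.
  move=> h1; apply: leq_trans h1 _; apply: subset_leq_card; apply/subsetP => t.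
  by rewrite !inE !mul1r subr0.
pose psi (u : F * F) := (u.1 + u.2, u.1).
have psi_inj : injective psi.
  by move=> [x1 y1] [x2 y2] [e1 e2]; rewrite /= in e1 e2; subst; rewrite (addrI _ e1).
apply: leq_trans hU _; rewrite -(card_imset _ psi_inj); apply: subset_leq_card.
apply/subsetP => P /imsetP [[t b]]; rewrite inE /= => /andP [bK ht] ->.
rewrite inE /= ht /= evalfK (bigD1 b) //= (_ : t + b - t - b = 0) ?mul0r //.
ring.
Qed.

Lemma weight_fK :
  (#|[set P : F * F | herm_pt q P && (evalxy fK P.1 P.2 != 0)%R]| + q.-1 * q.+1 <= q * q * q)%N.
Proof.
rewrite -cardX -(cardsID [set P : F * F | evalxy fK P.1 P.2 == 0] [set P | herm_pt q P]).
have -> : [set P | herm_pt q P] :&: [set P : F * F | evalxy fK P.1 P.2 == 0] =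
          [set P | herm_pt q P && (evalxy fK P.1 P.2 == 0)] by apply/setP => P; rewrite !inE.
have -> : [set P | herm_pt q P] :\: [set P : F * F | evalxy fK P.1 P.2 == 0] =
          [set P | herm_pt q P && (evalxy fK P.1 P.2 != 0)].
  by apply/setP => P; rewrite !inE andbC.
by rewrite addnC leq_add2r zeros_bound.
Qed.

Lemma fK0 : evalxy fK 0 0 != 0.
Proof.
rewrite evalfK; apply/prodf_neq0 => a; rewrite inE => /andP [_ anz].
by rewrite subrr sub0r oppr_eq0.
Qed.

End Main.

Theorem mainTheorem8 (F : finFieldType) (q : nat) :
  (exists m : nat, q = 2 ^ m)%N ->
  #|F| = (q ^ 2)%N ->
  exists d : nat, is_min_dist (@HL_code F q) d /\
    (q ^ 2 <= d)%N /\ (d <= q ^ 3 - q ^ 2 + 1)%N.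
Proof.
move=> [m qm] hF2.
have hF : #|F| = (q * q)%N by rewrite hF2; lia.
have hq : (2 <= q)%N.
  case: m qm => [|m] qm; last by rewrite qm expnS; have := expn_gt0 2 m; lia.
  exfalso; have := subset_leq_card (subsetT [set (0:F); 1]).
  by rewrite cards2 eq_sym oner_neq0 cardsT hF qm.
have ch : 2 \in [pchar F].
  by apply: (@card_finPcharP F 2 (2 * m)) => //; rewrite hF2 qm -expnM mulnC.
have hnat : [pchar F].-nat q by rewrite (eq_pnat _ (pcharf_eq ch)) qm pnatX pnat_id.
have frobD : forall u v : F, (u + v) ^+ q = u ^+ q + v ^+ q.
  by move=> u v; exact: exprDn_pchar.
have frobN : forall u : F, (- u) ^+ q = - (u ^+ q).
  by move=> u; exact: exprNn_pchar.
pose wf := [ffun P : HPt F q => evalxy (fK F q) (val P).1 (val P).2].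
pose w0 := [ffun P : HPt F q => (0 : F)].
have cf : HL_code wf.
  exists (fK F q); split; first exact: lifted_fK.
  by move=> P; rewrite ffunE.
have c0 : HL_code w0.
  exists 0; split.
    move=> al be; exists 0; split; first by rewrite size_poly0.
    by move=> t _; rewrite /evalxy meval0 horner0.
  by move=> P; rewrite ffunE /evalxy meval0.
have pt0 : herm_pt q ((0 : F), (0 : F)).
  by rewrite /herm_pt /= !expr0n eqn0Ngt (ltnW hq) /= addr0.
have neq : wf <> w0.
  move=> /ffunP /(_ (exist _ (0, 0) pt0)); rewrite !ffunE /=.
  by apply/eqP; apply: fK0.
pose Pd n := exists w1 w2 : {ffun HPt F q -> F}, [/\ @HL_code F q w1, @HL_code F q w2, w1 <> w2 & hamming w1 w2 = n].
have [d [Pdd dmin]] := @ex_min Pd (hamming wf w0) (ex_intro _ wf (ex_intro _ w0 (And4 cf c0 neq erefl))).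
have e3 : (q ^ 3 = q * q * q)%N by rewrite !expnS expn0 muln1 mulnA.
have e2 : (q ^ 2 = q * q)%N by rewrite !expnS expn0 muln1.
exists d; split; first split.
- exact: Pdd.
- by move=> w1 w2 c1 c2 ne; apply: dmin; exists w1, w2; split.
split.
- case: Pdd => w1 [w2 [c1 c2 ne <-]].
  case: c1 => f1 [l1 e1]; case: c2 => f2 [l2 ee2].
  have lh : lifted_fam q (f1 - f2).
    move=> al be; have [g1 [s1 h1]] := l1 al be; have [g2 [s2 h2]] := l2 al be.
    exists (g1 - g2); split.
      by apply: leq_trans (size_polyD _ _) _; rewrite size_opp geq_max s1 s2.
    move=> t ht; rewrite hornerD hornerN -h1 // -h2 //.
    by rewrite /evalxy mevalB.
  have hd : forall i, (w1 i != w2 i) = (evalxy (f1 - f2) (val i).1 (val i).2 != 0).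
    by move=> i; rewrite e1 ee2 /evalxy mevalB subr_eq0.
  have [i hi] : exists i, w1 i != w2 i.
    case: (boolP [exists i, w1 i != w2 i]) => [/existsP // | /existsPn H].
    exfalso; apply: ne; apply/ffunP => i; apply/eqP; have := H i; by rewrite negbK.
  rewrite /hamming.
  have -> : [set i | w1 i != w2 i] =
      [set i : HPt F q | (fun P : F * F => evalxy (f1 - f2) P.1 P.2 != 0) (val i)].
    by apply/setP => j; rewrite !inE hd.
  rewrite (@cardHP F q (fun P : F * F => evalxy (f1 - f2) P.1 P.2 != 0)) e2.
  apply: (lower hq hF frobD frobN lh (valP i)).
  by rewrite -hd.
- apply: leq_trans (dmin (hamming wf w0) _) _.
    by exists wf, w0; split.
  rewrite /hamming.
  have -> : [set i | wf i != w0 i] =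
      [set i : HPt F q | (fun P : F * F => evalxy (fK F q) P.1 P.2 != 0) (val i)].
    by apply/setP => j; rewrite !inE !ffunE.
  rewrite (@cardHP F q (fun P : F * F => evalxy (fK F q) P.1 P.2 != 0)).
  have := weight_fK hq hF frobD frobN.
  set N := #|_|; rewrite e2 e3 -subn1.
  have E : ((q - 1) * q.+1 + 1 = q * q)%N by case: (q) hq => [|k] // _; rewrite subn1 /= mulnS mulSn; lia.
  nia.
Qed.
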